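(* Let $\Gamma=(S,A)$ be a skew-symmetric graph on $S=\{1,\dots,n\}$ and $\varpi$ a weight vector for $\Gamma$. Let $K$ be the Kahan morphism of $\Gamma$ on $\mathbb F(x)$ and $K^\varpi$ the Kahan morphism of $\Gamma^\varpi$ on $\mathbb F(y)$, and let $\Sigma:\mathbb F(x)\to\mathbb F(y)$ be the decloning morphism. Then $K^\varpi\circ\Sigma=\Sigma\circ K$; $\Sigma$ is a morphism of Poisson fields from $(\mathbb F(x),\{\cdot,\cdot\})$ to $(\mathbb F(y),\{\cdot,\cdot\}^\varpi)$; and $K$ is a Poisson morphism if and only if $K^\varpi$ is a Poisson morphism. In particular $\Gamma$ has the Kahan-Poisson property if and only if $\Gamma^\varpi$ does.
   Context: $\mathbb F\in\{\mathbb R,\mathbb C\}$. A skew-symmetric graph is $\Gamma=(S,A)$ with $A=(a_{i,j})$ skew-symmetric over $\mathbb F$. Its Poisson bracket on $\mathbb F(x)=\mathbb F(x_1,\dots,x_n)$ is $\{x_i,x_j\}=a_{i,j}x_ix_j$. Its Kahan morphism (step size 1) is the field endomorphism $K$ with $K(x_i)=\tilde x_i$, the unique solution of $\tilde x_i-x_i=\tilde x_i\sum_j a_{i,j}x_j+x_i\sum_j a_{i,j}\tilde x_j$; $\Gamma$ has the Kahan-Poisson property if $K$ is a Poisson morphism. A weight vector is $\varpi:S\to\mathbb N^*$; the cloning $\Gamma^\varpi$ has vertices $(i,k)$, $i\in S$, $1\le k\le\varpi(i)$, and entries $a^\varpi_{(i,k),(j,\ell)}=a_{i,j}$; its coordinates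 are $y_{i,k}$, $\mathbb F(y)$ is the field of rational functions in all $y_{i,k}$, with Poisson bracket $\{y_{i,k},y_{j,\ell}\}^\varpi=a_{i,j}y_{i,k}y_{j,\ell}$, and its Kahan morphism $K^\varpi$ is defined by the same recipe. The decloning morphism is the field morphism $\Sigma:\mathbb F(x)\to\mathbb F(y)$, $\Sigma(x_i)=\sum_{k=1}^{\varpi(i)}y_{i,k}$. *)

(* Defs.v *)
From HB Require Import structures.
From mathcomp Require Import all_boot all_algebra.
From mathcomp Require Import fraction.
From mathcomp Require Import mpoly.

Set Implicit Arguments.
Unset Strict Implicit.
Unset Printing Implicit Defensive.

Import GRing.Theory.
Local Open Scope ring_scope.

(* The field F(x_v : v in V) of rational functions in variables        *)
(* indexed by a finite type V: the fraction field of the multivariate   *)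
(* polynomial ring F[x_v], variables numbered through enum_rank.        *)
Section RatFun.
Variables (F : fieldType) (V : finType).

Definition polV := {mpoly F[#|V|]}.
Definition ratf := {fraction polV}.

Definition var (v : V) : ratf := tofrac ('X_(enum_rank v) : polV).
Definition cst (c : F) : ratf := tofrac (c%:MP : polV).

Definition pderiv_poly (v : V) (p : polV) : polV := mderiv (enum_rank v) p.

(* partial derivative d/dx_v on rational functions, via the quotient rule
   applied to any representative p/q of f (independent of the choice) *)
Definition pderiv (v : V) (f : ratf) : ratf :=
  let r := repr f in
  tofrac (pderiv_poly v (\n_r) * \d_r - \n_r * pderiv_poly v (\d_r))
    / tofrac (\d_r ^+ 2).

(* The log-canonical Poisson bracket of the skew-symmetric matrix a:
   {x_u, x_v} = a u v x_u x_v, extended as a biderivation: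
   {f, g} = sum_{u,v} a u v x_u x_v (df/dx_u) (dg/dx_v). *)
Definition pbracket (a : V -> V -> F) (f g : ratf) : ratf :=
  \sum_(u : V) \sum_(v : V)
     cst (a u v) * var u * var v * pderiv u f * pderiv v g.

(* K is an F-algebra morphism (fixes constants) whose values on the
   generators solve the Kahan equations (step size 1):
   K x_i - x_i = K x_i * sum_j a_ij x_j + x_i * sum_j a_ij K x_j.  *)
Definition is_kahan (a : V -> V -> F) (K : ratf -> ratf) : Prop :=
  (forall c, K (cst c) = cst c) /\
  (forall i : V,
     K (var i) - var i =
       K (var i) * (\sum_(j : V) cst (a i j) * var j)
     + var i * (\sum_(j : V) cst (a i j) * K (var j))).

End RatFun.

Definition poisson_map (F : fieldType) (V W : finType)
  (a : V -> V -> F) (b : W -> W -> F) (phi : ratf F V -> ratf F W) : Prop :=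
  forall f g : ratf F V, phi (pbracket a f g) = pbracket b (phi f) (phi g).

Definition kahan_poisson (F : fieldType) (V : finType) (a : V -> V -> F) : Prop :=
  forall K : {rmorphism ratf F V -> ratf F V},
    is_kahan a K -> poisson_map a a K.

(* Cloning: vertex set {(i,k) | i in 'I_n, k < w i} (k shifted to start at 0) *)
Definition cloneV (n : nat) (w : 'I_n -> nat) : finType := {i : 'I_n & 'I_(w i)}.

Definition mat_fun (F : fieldType) (n : nat) (A : 'M[F]_n) : 'I_n -> 'I_n -> F :=
  fun i j => A i j.

Definition clone_fun (F : fieldType) (n : nat) (A : 'M[F]_n) (w : 'I_n -> nat)
  : cloneV w -> cloneV w -> F :=
  fun u v => A (tag u) (tag v).

Definition is_decloning (F : fieldType) (n : nat) (w : 'I_n -> nat)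
  (Sig : ratf F 'I_n -> ratf F (cloneV w)) : Prop :=
  (forall c, Sig (cst 'I_n c) = cst (cloneV w) c) /\
  (forall i : 'I_n,
     Sig (var F i) = \sum_(k : 'I_(w i)) var F (Tagged (fun j => 'I_(w j)) k : cloneV w)).

Arguments clone_fun {F n} A w _ _.
Arguments mat_fun {F n} A _ _.
Arguments is_decloning {F n w} Sig.
Arguments is_kahan {F V} a K.
Arguments poisson_map {F V W} a b phi.
Arguments kahan_poisson {F V} a.

(* Main.v *)
Require Import Defs.
From HB Require Import structures.
From mathcomp Require Import all_boot all_algebra.
From mathcomp Require Import fraction mpoly.
From mathcomp Require Import ring.
Import GRing.Theory Num.Theory.
Local Open Scope ring_scope.

Module Helpers.
Set Implicit Arguments. Unset Strict Implicit. Unset Printing Implicit Defensive.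
Lemma frac_repr (R : idomainType) (f : {fraction R}) :
  f = tofrac (\n_(repr f)) / tofrac (\d_(repr f)).
Proof.
have hd : \d_(repr f) != 0 by exact: denom_ratioP.
apply: (canRL (mulfK _)); first by rewrite tofrac_eq0.
rewrite -{1}[f]reprK.
set x := repr f.
unlock tofrac.
have -> : forall a b : {fraction R}, a * b = FracField.mul a b by [].
rewrite -FracField.pi_mul.
apply/eqP; rewrite piE /= FracField.equivfE /FracField.mulf /=.
rewrite !numden_Ratio ?oner_neq0 ?mulf_neq0 //.
rewrite !mulr1 mulrC ?eqxx //. all: try exact: oner_neq0.
Qed.

Lemma quot_alg (K : fieldType) (P Q N D dP dQ dN dD : K) :
  Q != 0 -> D != 0 -> P * D = N * Q -> dP * D + P * dD = dN * Q + N * dQ ->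
  (dN * D - N * dD) / D ^+ 2 = (dP * Q - P * dQ) / Q ^+ 2.
Proof.
move=> hQ hD e1 e2.
have eP : P = N * Q / D by rewrite -e1 mulfK.
have edP : dP = (dN * Q + N * dQ - P * dD) / D.
  by rewrite -e2 addrK mulfK.
rewrite edP eP; field.
by rewrite hQ hD.
Qed.


Lemma add_alg1 (K : fieldType) (a b c d : K) : b != 0 -> d != 0 ->
  a / b + c / d = (a * d + c * b) / (b * d).
Proof. move=> hb hd; field; by rewrite hb hd. Qed.

Lemma add_alg2 (K : fieldType) (a b c d da db dc dd : K) : b != 0 -> d != 0 ->
  ((da * d + a * dd + (dc * b + c * db)) * (b * d) -
   (a * d + c * b) * (db * d + b * dd)) / (b * d) ^+ 2 =
  (da * b - a * db) / b ^+ 2 + (dc * d - c * dd) / d ^+ 2.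
Proof. move=> hb hd; field; by rewrite hb hd. Qed.

Lemma mul_alg1 (K : fieldType) (a b c d : K) : b != 0 -> d != 0 ->
  a / b * (c / d) = (a * c) / (b * d).
Proof. move=> hb hd; field; by rewrite hb hd. Qed.

Lemma mul_alg2 (K : fieldType) (a b c d da db dc dd : K) : b != 0 -> d != 0 ->
  ((da * c + a * dc) * (b * d) - (a * c) * (db * d + b * dd)) / (b * d) ^+ 2 =
  a / b * ((dc * d - c * dd) / d ^+ 2) + (da * b - a * db) / b ^+ 2 * (c / d).
Proof. move=> hb hd; field; by rewrite hb hd. Qed.

Lemma submm_ n (m : 'X_{1..n}) : (m - m)%MM = 0%MM.
Proof. by apply/mnmP=> i; rewrite mnmBE subnn mnm0E. Qed.

Section RF.
Variables (F : fieldType) (V : finType).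
Local Notation R := (ratf F V).
Local Notation P := (polV F V).

Lemma pderiv_frac (v : V) (p q : P) : q != 0 ->
  pderiv v (tofrac p / tofrac q) =
  (tofrac (pderiv_poly v p) * tofrac q - tofrac p * tofrac (pderiv_poly v q))
    / tofrac q ^+ 2.
Proof.
move=> hq.
rewrite /pderiv.
set r := repr _.
have hd : \d_r != 0 by exact: denom_ratioP.
have e := frac_repr (tofrac p / tofrac q).
rewrite -/r in e.
have e1 : tofrac p * tofrac \d_r = tofrac \n_r * tofrac q :> R.
  apply/eqP; rewrite -eqr_div ?tofrac_eq0 //; exact/eqP.
have e1' : p * \d_r = \n_r * q by apply/eqP; rewrite -tofrac_eq !rmorphM /= e1.
have e2 := congr1 (pderiv_poly v) e1'.
rewrite /pderiv_poly !mderivM in e2.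
rewrite rmorphXn /=.
have e3 := congr1 (@tofrac _) e2.
rewrite !rmorphD !rmorphM /= in e3.
rewrite rmorphB !rmorphM /=.
apply: quot_alg; rewrite ?tofrac_eq0 //.
Qed.

Lemma pderiv_tofrac (v : V) (p : P) :
  pderiv v (tofrac p) = tofrac (pderiv_poly v p).
Proof.
have -> : tofrac p = tofrac p / tofrac 1 :> R by rewrite rmorph1 divr1.
rewrite pderiv_frac ?oner_neq0 //.
rewrite /pderiv_poly -[1 : P]/(1%:MP) mderivC rmorph0 rmorph1 mulr0 subr0.
by rewrite expr1n !mulr1 divr1.
Qed.

Lemma frac_ex (f : R) : exists p q : P, q != 0 /\ f = tofrac p / tofrac q.
Proof. exists \n_(repr f), \d_(repr f); split; [exact: denom_ratioP | exact: frac_repr]. Qed.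

Lemma pderivD (v : V) (f g : R) : pderiv v (f + g) = pderiv v f + pderiv v g.
Proof.
have [p1 [q1 [h1 ->]]] := frac_ex f.
have [p2 [q2 [h2 ->]]] := frac_ex g.
have h1' : tofrac q1 != 0 :> R by rewrite tofrac_eq0.
have h2' : tofrac q2 != 0 :> R by rewrite tofrac_eq0.
have -> : tofrac p1 / tofrac q1 + tofrac p2 / tofrac q2 =
  tofrac (p1 * q2 + p2 * q1) / tofrac (q1 * q2) :> R.
  rewrite rmorphD !rmorphM /=. apply: add_alg1. exact: h1'. exact: h2'.
rewrite !pderiv_frac ?mulf_neq0 // /pderiv_poly !mderivD !mderivM.
rewrite !rmorphD !rmorphM /=. apply: add_alg2. exact: h1'. exact: h2'.
Qed.

Lemma pderivM (v : V) (f g : R) :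
  pderiv v (f * g) = f * pderiv v g + pderiv v f * g.
Proof.
have [p1 [q1 [h1 ->]]] := frac_ex f.
have [p2 [q2 [h2 ->]]] := frac_ex g.
have h1' : tofrac q1 != 0 :> R by rewrite tofrac_eq0.
have h2' : tofrac q2 != 0 :> R by rewrite tofrac_eq0.
have -> : tofrac p1 / tofrac q1 * (tofrac p2 / tofrac q2) =
  tofrac (p1 * p2) / tofrac (q1 * q2) :> R.
  rewrite !rmorphM /=. apply: mul_alg1. exact: h1'. exact: h2'.
rewrite !pderiv_frac ?mulf_neq0 // /pderiv_poly !mderivM.
rewrite !rmorphD !rmorphM /=. apply: mul_alg2. exact: h1'. exact: h2'.
Qed.

Lemma pderiv0 (v : V) : pderiv v (0 : R) = 0.
Proof. by rewrite -(rmorph0 (@tofrac P)) pderiv_tofrac /pderiv_poly mderiv0 rmorph0. Qed.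

Lemma pderivB (v : V) (f g : R) : pderiv v (f - g) = pderiv v f - pderiv v g.
Proof.
apply/eqP; rewrite eq_sym subr_eq -pderivD subrK //.
Qed.

HB.instance Definition _ (v : V) :=
  GRing.isZmodMorphism.Build R R (pderiv v) (pderivB v).

Lemma pderiv_sum (v : V) (I : finType) (f : I -> R) :
  pderiv v (\sum_i f i) = \sum_i pderiv v (f i).
Proof. exact: (big_morph (pderiv v) (pderivD v) (pderiv0 v)). Qed.

Lemma pderiv_cst (v : V) (c : F) : pderiv v (cst V c) = 0.
Proof. by rewrite /cst pderiv_tofrac /pderiv_poly mderivC rmorph0. Qed.

Lemma pderiv_var (v u : V) : pderiv v (var F u) = (u == v)%:R.
Proof.
rewrite /var pderiv_tofrac /pderiv_poly mderivX mnm1E (inj_eq enum_rank_inj).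
case: eqP => [->|_]; last by rewrite scale0r rmorph0.
by rewrite submm_ mpolyX0 scale1r rmorph1.
Qed.


Lemma cst0 : cst V (0 : F) = 0.
Proof. by rewrite /cst mpolyC0 rmorph0. Qed.

Lemma cst1 : cst V (1 : F) = 1.
Proof. by rewrite /cst mpolyC1 rmorph1. Qed.

Lemma ratf_ind (Q : R -> Prop) :
  (forall c, Q (cst V c)) -> (forall v, Q (var F v)) ->
  (forall f g, Q f -> Q g -> Q (f + g)) ->
  (forall f g, Q f -> Q g -> Q (f * g)) -> forall p : P, Q (tofrac p).
Proof.
move=> hc hv hD hM.
have h1 : Q 1 by rewrite -cst1.
have hX : forall (f : R) k, Q f -> Q (f ^+ k).
  by move=> f k hf; elim: k => [|k ih]; rewrite ?expr0 // exprS; exact: hM.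
move=> p; elim/mpolyind: p => [|c m p _ _ ih].
  by rewrite rmorph0 -cst0.
rewrite rmorphD /=; apply: (hD) => //.
rewrite -mul_mpolyC rmorphM /=; apply: (hM); first exact: hc.
rewrite mpolyXE_id rmorph_prod /=.
apply: (big_ind Q) => //.
move=> i _; rewrite rmorphXn /=; apply: (hX).
by have := hv (enum_val i); rewrite /var enum_valK.
Qed.

Lemma rmorph_ext (L : fieldType) (phi psi : {rmorphism R -> L}) :
  (forall c, phi (cst V c) = psi (cst V c)) ->
  (forall v, phi (var F v) = psi (var F v)) -> forall f, phi f = psi f.
Proof.
move=> hc hv.
have hp : forall p, phi (tofrac p) = psi (tofrac p).
  apply: (@ratf_ind (fun f => phi f = psi f)) => // f g hf hg; by rewrite ?rmorphD ?rmorphM hf hg.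
move=> f; have [p [q [_ ->]]] := frac_ex f; by rewrite !fmorph_div !hp.
Qed.

Lemma var_neq0 (v : V) : var F v != 0.
Proof.
rewrite /var tofrac_eq0; apply/negP => /eqP h.
have := congr1 (mcoeff U_(enum_rank v)) h.
by rewrite mcoeffX eqxx mcoeff0 => /eqP; rewrite oner_eq0.
Qed.

End RF.

Lemma alg_DlM (K : comRingType) (a b a' b' S1 S2 : K) :
  a * b' + a' * b - (a * S2 + b * S1) = a * (b' - S2) + b * (a' - S1).
Proof. by rewrite !mulrBr opprD addrACA [a' * b]mulrC. Qed.

Lemma alg_DlM2 (K : comRingType) (x y a b c : K) :
  (x * y + a * b) * c = x * (y * c) + b * (a * c).
Proof. by rewrite mulrDl -!mulrA [a * (b * c)]mulrCA. Qed.

Section Chain.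
Variables (F : fieldType) (V W : finType).
Variable phi : {rmorphism ratf F V -> ratf F W}.
Hypothesis hphi : forall c, phi (cst V c) = cst W c.

Let Dl (w : W) (f : ratf F V) : ratf F W :=
  pderiv w (phi f) - \sum_v phi (pderiv v f) * pderiv w (phi (var F v)).

Let DlD w f g : Dl w (f + g) = Dl w f + Dl w g.
Proof.
rewrite /Dl rmorphD pderivD.
under eq_bigr do rewrite pderivD rmorphD mulrDl.
by rewrite big_split /= opprD addrACA.
Qed.

Let DlM w f g : Dl w (f * g) = phi f * Dl w g + phi g * Dl w f.
Proof.
rewrite /Dl rmorphM pderivM.
under eq_bigr => v _ do rewrite pderivM rmorphD (rmorphM phi f) (rmorphM phi _ g) alg_DlM2.
rewrite big_split /= -!mulr_sumr.
exact: alg_DlM.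
Qed.

Let Dl0 w : forall p, Dl w (tofrac p) = 0.
Proof.
apply: (@ratf_ind _ _ (fun f => Dl w f = 0)).
- move=> c; rewrite /Dl hphi pderiv_cst big1 ?subr0 // => v _.
  by rewrite pderiv_cst rmorph0 mul0r.
- move=> u; rewrite /Dl.
  rewrite (bigD1 u) //= pderiv_var eqxx rmorph1 mul1r big1 ?addr0 ?subrr //.
  by move=> v hv; rewrite pderiv_var eq_sym (negbTE hv) rmorph0 mul0r.
- by move=> f g hf hg; rewrite DlD hf hg addr0.
- by move=> f g hf hg; rewrite DlM hf hg !mulr0 addr0.
Qed.

Lemma chain_rule (w : W) (f : ratf F V) :
  pderiv w (phi f) = \sum_v phi (pderiv v f) * pderiv w (phi (var F v)).
Proof.
apply/eqP; rewrite -subr_eq0; apply/eqP; rewrite -/(Dl w f).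
have [p [q [hq ef]]] := frac_ex f.
have ep : tofrac p = f * tofrac q by rewrite ef divfK // tofrac_eq0.
have := Dl0 w p; rewrite ep DlM Dl0 mulr0 add0r => /eqP.
by rewrite mulf_eq0 fmorph_eq0 tofrac_eq0 (negbTE hq) => /eqP.
Qed.

End Chain.

Section Br.
Variables (F : fieldType) (V : finType) (a : V -> V -> F).
Local Notation R := (ratf F V).
Local Notation X := (var F).

Lemma ralg1 (K : comRingType) (c x y d : K) : c * x * y * 1 * d = x * (c * y * d).
Proof. ring. Qed.

Lemma ralg2 (K : comRingType) (c x y d : K) : c * x * y * d * 1 = y * (c * x * d).
Proof. ring. Qed.

Lemma pbracket_var_l (i : V) (h : R) :
  pbracket a (X i) h = X i * \sum_j cst V (a i j) * X j * pderiv j h.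
Proof.
rewrite /pbracket (bigD1 i) //= [X in _ + X]big1 ?addr0; last first.
  move=> u hu; apply: big1 => v _.
  by rewrite pderiv_var eq_sym (negbTE hu) mulr0 mul0r.
rewrite mulr_sumr; apply: eq_bigr => v _.
by rewrite pderiv_var eqxx ralg1.
Qed.

Lemma pbracket_var_r (j : V) (h : R) :
  pbracket a h (X j) = X j * \sum_u cst V (a u j) * X u * pderiv u h.
Proof.
rewrite /pbracket mulr_sumr; apply: eq_bigr => u _.
rewrite (bigD1 j) //= [X in _ + X]big1 ?addr0; last first.
  move=> v hv.
  by rewrite pderiv_var eq_sym (negbTE hv) mulr0.
by rewrite pderiv_var eqxx ralg2.
Qed.

Lemma pbracket_vv (u v : V) :
  pbracket a (X u) (X v) = cst V (a u v) * X u * X v.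
Proof.
rewrite pbracket_var_l (bigD1 v) //= [X in _ + X]big1 ?addr0; last first.
  move=> j hj.
  by rewrite pderiv_var eq_sym (negbTE hj) mulr0.
by rewrite pderiv_var eqxx mulr1 mulrCA mulrA.
Qed.

Lemma ralg3 (K : comRingType) (c x y z w d : K) :
  c * (x * y + z * w) * d = x * (c * y * d) + w * (c * z * d).
Proof. ring. Qed.

Lemma ralg4 (K : comRingType) (c x y z w : K) :
  c * (x * y + z * w) = x * (c * y) + w * (c * z).
Proof. ring. Qed.

Lemma pbracketMl (f1 f2 g : R) :
  pbracket a (f1 * f2) g = f1 * pbracket a f2 g + f2 * pbracket a f1 g.
Proof.
rewrite /pbracket !mulr_sumr -big_split; apply: eq_bigr => u _.
rewrite !mulr_sumr -big_split; apply: eq_bigr => v _.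
by rewrite pderivM ralg3.
Qed.

Lemma pbracketMr (f g1 g2 : R) :
  pbracket a f (g1 * g2) = g1 * pbracket a f g2 + g2 * pbracket a f g1.
Proof.
rewrite /pbracket !mulr_sumr -big_split; apply: eq_bigr => u _.
rewrite !mulr_sumr -big_split; apply: eq_bigr => v _.
by rewrite pderivM ralg4.
Qed.

Lemma pbracketDl (f1 f2 g : R) :
  pbracket a (f1 + f2) g = pbracket a f1 g + pbracket a f2 g.
Proof.
rewrite /pbracket -big_split; apply: eq_bigr => u _.
rewrite -big_split; apply: eq_bigr => v _.
by rewrite pderivD mulrDr mulrDl.
Qed.

Lemma pbracketDr (f g1 g2 : R) :
  pbracket a f (g1 + g2) = pbracket a f g1 + pbracket a f g2.
Proof.
rewrite /pbracket -big_split; apply: eq_bigr => u _.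
rewrite -big_split; apply: eq_bigr => v _.
by rewrite pderivD mulrDr.
Qed.

Lemma pbracket0l (g : R) : pbracket a 0 g = 0.
Proof.
by rewrite /pbracket big1 // => u _; rewrite big1 // => v _; rewrite pderiv0 mulr0 mul0r.
Qed.

Lemma pbracket0r (f : R) : pbracket a f 0 = 0.
Proof.
by rewrite /pbracket big1 // => u _; rewrite big1 // => v _; rewrite pderiv0 mulr0.
Qed.

Lemma pbracket_suml (I : finType) (f : I -> R) (g : R) :
  pbracket a (\sum_i f i) g = \sum_i pbracket a (f i) g.
Proof. exact: (big_morph (fun x => pbracket a x g) (fun x y => pbracketDl x y g) (pbracket0l g)). Qed.

Lemma pbracket_sumr (I : finType) (f : R) (g : I -> R) :
  pbracket a f (\sum_i g i) = \sum_i pbracket a f (g i).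
Proof. exact: (big_morph (fun x => pbracket a f x) (fun x y => pbracketDr f x y) (pbracket0r f)). Qed.

Lemma pbracket_prod (u P v Q : R) :
  pbracket a (u * P) (v * Q) =
  u * v * pbracket a P Q + u * Q * pbracket a P v
  + P * v * pbracket a u Q + P * Q * pbracket a u v.
Proof.
rewrite pbracketMl !pbracketMr !mulrDr !mulrA addrA.
by rewrite [u * Q]mulrC [P * v]mulrC.
Qed.

End Br.


Section Expand.
Variables (F : fieldType) (W : finType) (b : W -> W -> F).
Local Notation R := (ratf F W).

Lemma sum_mul2 (K : comRingType) (I J : finType) (c : K) (A : I -> K) (B : J -> K) :
  c * (\sum_u A u) * (\sum_v B v) = \sum_u \sum_v c * A u * B v.
Proof.
rewrite [c * _]mulr_sumr mulr_suml; apply: eq_bigr => u _.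
by rewrite mulr_sumr.
Qed.

Lemma ralg6 (K : comRingType) (c al be x y : K) :
  c * (al * x) * (be * y) = al * be * (c * x * y).
Proof. ring. Qed.

Lemma pbracket_expand (U : finType) (Xs al be : U -> R) (f g : R) :
  (forall s, pderiv s f = \sum_u al u * pderiv s (Xs u)) ->
  (forall t, pderiv t g = \sum_v be v * pderiv t (Xs v)) ->
  pbracket b f g = \sum_u \sum_v al u * be v * pbracket b (Xs u) (Xs v).
Proof.
move=> hf hg; rewrite /pbracket.
under eq_bigr => s _ do under eq_bigr => t _ do rewrite hf hg sum_mul2.
under eq_bigr => s _ do rewrite exchange_big.
under eq_bigr => s _ do under eq_bigr => u _ do rewrite exchange_big.
rewrite exchange_big; apply: eq_bigr => u _.
rewrite exchange_big; apply: eq_bigr => v _.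
rewrite mulr_sumr; apply: eq_bigr => s _.
rewrite mulr_sumr; apply: eq_bigr => t _.
exact: ralg6.
Qed.
End Expand.

Section Gen.
Variables (F : fieldType) (V W : finType) (a : V -> V -> F) (b : W -> W -> F).

Lemma ralg7 (K : comRingType) (c x y p q : K) :
  c * x * y * p * q = p * q * (c * x * y).
Proof. ring. Qed.

Lemma poisson_gen (phi : {rmorphism ratf F V -> ratf F W}) :
  (forall c, phi (cst V c) = cst W c) ->
  (forall u v, pbracket b (phi (var F u)) (phi (var F v)) =
               phi (cst V (a u v) * var F u * var F v)) ->
  poisson_map a b phi.
Proof.
move=> hc h f g.
rewrite (@pbracket_expand F W b V (fun u => phi (var F u))
     (fun u => phi (pderiv u f)) (fun u => phi (pderiv u g))); last first.
- by move=> t; rewrite chain_rule.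
- by move=> s; rewrite chain_rule.
rewrite /pbracket rmorph_sum; apply: eq_bigr => u _.
rewrite rmorph_sum; apply: eq_bigr => v _.
rewrite ralg7 (rmorphM phi (pderiv u f * pderiv v g)) (rmorphM phi (pderiv u f)).
by rewrite -h.
Qed.
End Gen.

Section Clone.
Variables (F : fieldType) (n : nat) (A : 'M[F]_n) (w : 'I_n -> nat).
Local Notation C := (cloneV w).
Local Notation RC := (ratf F C).
Local Notation RI := (ratf F 'I_n).
Local Notation T_ k := (Tagged (fun j => 'I_(w j)) k : C).

Lemma sum_clone (K : nmodType) (G : C -> K) :
  \sum_t G t = \sum_i \sum_(k : 'I_(w i)) G (T_ k).
Proof.
rewrite (sig_big_dep xpredT (fun _ => xpredT) (fun i (k : 'I_(w i)) => G (T_ k))) /=.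
by apply: eq_bigr => t _; rewrite taggedK.
Qed.

Lemma sum_tag (K : nmodType) (v : 'I_n) (G : C -> K) :
  \sum_(k : 'I_(w v)) G (T_ k) = \sum_(s | tag s == v) G s.
Proof.
rewrite [RHS]big_mkcond [RHS]sum_clone (bigD1 v) //= [X in _ + X]big1 ?addr0.
  by apply: eq_bigr => k _; rewrite eqxx.
by move=> i hi; apply: big1 => k _ /=; rewrite (negbTE hi).
Qed.

Lemma sum_eq_tag (t : C) (v : 'I_n) :
  \sum_(s | tag s == v) (s == t)%:R = (tag t == v)%:R :> RC.
Proof.
case: (eqVneq (tag t) v) => h.
  rewrite (bigD1 t) ?h //= eqxx big1 ?addr0 // => s /andP[_ hs].
  by rewrite (negbTE hs).
by apply: big1 => s hs; case: eqP => // e; rewrite -e hs in h.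
Qed.

Variable Sig : {rmorphism RI -> RC}.
Hypothesis hS : is_decloning Sig.

Lemma Sig_cst c : Sig (cst 'I_n c) = cst C c.
Proof. by case: hS. Qed.

Lemma Sig_var i : Sig (var F i) = \sum_(k : 'I_(w i)) var F (T_ k).
Proof. by case: hS. Qed.

Lemma pderiv_Sig (t : C) (h : RI) : pderiv t (Sig h) = Sig (pderiv (tag t) h).
Proof.
rewrite (chain_rule Sig_cst).
under eq_bigr => v _ do rewrite Sig_var pderiv_sum.
under eq_bigr => v _ do under eq_bigr => k _ do rewrite pderiv_var.
under eq_bigr => v _ do rewrite (sum_tag v (fun s => (s == t)%:R)) sum_eq_tag.
rewrite (bigD1 (tag t)) //= eqxx mulr1 big1 ?addr0 // => v hv.
by rewrite eq_sym (negbTE hv) mulr0.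
Qed.

Lemma Sig_lin (i : 'I_n) (c : 'I_n -> F) (G : 'I_n -> RI) :
  Sig (\sum_j cst 'I_n (c j) * var F j * G j) =
  \sum_(t : C) cst C (c (tag t)) * var F t * Sig (G (tag t)).
Proof.
rewrite rmorph_sum sum_clone; apply: eq_bigr => j _.
rewrite !rmorphM /= Sig_cst Sig_var mulr_sumr mulr_suml; apply: eq_bigr => k _.
by [].
Qed.

Lemma clone_br_l (s : C) (h : RI) :
  pbracket (clone_fun A w) (var F s) (Sig h) =
  var F s * Sig (\sum_j cst 'I_n (A (tag s) j) * var F j * pderiv j h).
Proof.
rewrite pbracket_var_l (Sig_lin (tag s)); congr (_ * _).
by apply: eq_bigr => t _; rewrite pderiv_Sig.
Qed.

Lemma clone_br_r (t : C) (h : RI) :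
  pbracket (clone_fun A w) (Sig h) (var F t) =
  var F t * Sig (\sum_u cst 'I_n (A u (tag t)) * var F u * pderiv u h).
Proof.
rewrite pbracket_var_r (Sig_lin (tag t)); congr (_ * _).
by apply: eq_bigr => u _; rewrite pderiv_Sig.
Qed.

Lemma Sig_poisson : poisson_map (mat_fun A) (clone_fun A w) Sig.
Proof.
apply: poisson_gen; first exact: Sig_cst.
move=> u v; rewrite !Sig_var pbracket_suml.
rewrite !rmorphM /= Sig_cst !Sig_var sum_mul2; apply: eq_bigr => k _.
rewrite pbracket_sumr; apply: eq_bigr => l _.
by rewrite pbracket_vv.
Qed.

End Clone.

Section Lin.
Variables (F : fieldType) (V : finType).
Local Notation P := (polV F V).

Lemma lin_uniq (m : nat) (c : 'I_m -> 'I_m -> F) (X T : 'I_m -> P)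
  (D : 'I_m -> ratf F V) :
  (forall i, mcoeff 0 (X i) = 0) -> (forall i, mcoeff 0 (T i) = 0) ->
  (forall i, D i * (1 - tofrac (T i)) - tofrac (X i) * \sum_j cst V (c i j) * D j = 0) ->
  forall i, D i = 0.
Proof.
move=> hX hT hD.
pose Pm : 'M[P]_m := \matrix_(i, j) ((i == j)%:R * (1 - T i) - X i * (c i j)%:MP).
have h1 : map_mx (mcoeff 0) Pm = 1%:M.
  apply/matrixP => i j; rewrite !mxE rmorphB !rmorphM rmorphB /= hX hT rmorph1 rmorph_nat.
  by rewrite mul0r !subr0 mulr1.
have hdet : \det Pm != 0.
  apply/eqP => e; have := det_map_mx (mcoeff 0 : {rmorphism P -> F}) Pm.
  rewrite h1 det1 e rmorph0 => h; by have := @oner_neq0 F; rewrite h eqxx.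
pose Mm := map_mx (@tofrac P) Pm.
have hM : Mm \in unitmx.
  rewrite unitmxE unitfE /Mm (det_map_mx (@tofrac P : {rmorphism P -> ratf F V})).
  by rewrite tofrac_eq0.
pose Dv : 'cV[ratf F V]_m := \col_i D i.
have hMD : Mm *m Dv = 0.
  apply/matrixP => i k; rewrite !mxE.
  under eq_bigr => j _ do rewrite !mxE rmorphB !rmorphM rmorphB rmorph1 rmorph_nat /= mulrBl.
  have e1 : \sum_j (i == j)%:R * (1 - tofrac (T i)) * D j = (1 - tofrac (T i)) * D i.
    rewrite (bigD1 i) //= eqxx mul1r big1 ?addr0 // => j hj.
    by rewrite eq_sym (negbTE hj) !mul0r.
  have e2 : \sum_j tofrac (X i) * tofrac (c i j)%:MP * D j =
            tofrac (X i) * \sum_j cst V (c i j) * D j.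
    by rewrite mulr_sumr; apply: eq_bigr => j _; rewrite mulrA.
  by rewrite sumrB e1 e2 mulrC hD.
move=> i.
have := congr1 (mulmx (invmx Mm)) hMD.
rewrite mulKmx // mulmx0 => /matrixP /(_ i ord0).
by rewrite !mxE.
Qed.

End Lin.

Lemma alg_lin (R : comRingType) (Y Z X T SY SZ : R) :
  Y - X = Y * T + X * SY -> Z - X = Z * T + X * SZ ->
  (Y - Z) * (1 - T) - X * (SY - SZ) = 0.
Proof.
move=> h1 h2.
have -> : (Y - Z) * (1 - T) - X * (SY - SZ) =
  (Y - X - (Y * T + X * SY)) - (Z - X - (Z * T + X * SZ)) by ring.
by rewrite h1 h2 !subrr.
Qed.

Lemma alg_solve (R : fieldType) (k x S B : R) :
  1 - S != 0 -> k - x = k * S + x * B -> k = x * ((1 + B) / (1 - S)).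
Proof.
move=> hS h.
have e : k * (1 - S) = x * (1 + B).
  apply/eqP; rewrite -subr_eq0; apply/eqP.
  have -> : k * (1 - S) - x * (1 + B) = (k - x) - (k * S + x * B) by ring.
  by rewrite h subrr.
by rewrite mulrA -e mulfK.
Qed.

Lemma alg_psi (R : fieldType) (xi xj Br E1 E2 Ri Rj c : R) :
  xi != 0 -> xj != 0 ->
  xi * xj * Br + xi * Rj * (xj * E1) + Ri * xj * (xi * E2) + Ri * Rj * (c * xi * xj)
    = c * (xi * Ri) * (xj * Rj) ->
  Br + Rj * E1 + Ri * E2 = 0.
Proof.
move=> hi hj h.
have : xi * xj * (Br + Rj * E1 + Ri * E2) = 0.
  have -> : xi * xj * (Br + Rj * E1 + Ri * E2) =
    (xi * xj * Br + xi * Rj * (xj * E1) + Ri * xj * (xi * E2) + Ri * Rj * (c * xi * xj))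
    - c * (xi * Ri) * (xj * Rj) by ring.
  by rewrite h subrr.
by move/eqP; rewrite !mulf_eq0 (negbTE hi) (negbTE hj) /= => /eqP.
Qed.

Lemma alg_concl (R : comRingType) (ys yt Br E1 E2 P Q c : R) :
  Br + Q * E1 + P * E2 = 0 ->
  ys * yt * Br + ys * Q * (yt * E1) + P * yt * (ys * E2) + P * Q * (c * ys * yt)
    = c * (ys * P) * (yt * Q).
Proof.
move=> h.
have -> : ys * yt * Br + ys * Q * (yt * E1) + P * yt * (ys * E2) + P * Q * (c * ys * yt)
  = ys * yt * (Br + Q * E1 + P * E2) + c * (ys * P) * (yt * Q) by ring.
by rewrite h mulr0 add0r.
Qed.

Section Kahan.
Variables (F : fieldType) (n : nat) (A : 'M[F]_n) (w : 'I_n -> nat).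
Local Notation C := (cloneV w).
Local Notation RC := (ratf F C).
Local Notation RI := (ratf F 'I_n).
Local Notation T_ k := (Tagged (fun j => 'I_(w j)) k : C).
Variables (Sig : {rmorphism RI -> RC}).
Hypothesis hS : is_decloning Sig.

Definition Ssum (i : 'I_n) : RI := \sum_j cst 'I_n (A i j) * var F j.
Local Notation Xc i := (Sig (var F i)).

Lemma Sig_S i : Sig (Ssum i) = \sum_j cst C (A i j) * Xc j.
Proof.
rewrite /Ssum rmorph_sum; apply: eq_bigr => j _.
by rewrite rmorphM /= (Sig_cst hS).
Qed.

Lemma Sig_S' i : Sig (Ssum i) = \sum_t cst C (A i (tag t)) * var F t.
Proof.
rewrite Sig_S sum_clone; apply: eq_bigr => j _.
by rewrite (Sig_var hS) mulr_sumr.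
Qed.

Variables (Kw : {rmorphism RC -> RC}).
Hypothesis hKw : is_kahan (clone_fun A w) Kw.

Lemma Kw_gen (s : C) :
  Kw (var F s) - var F s = Kw (var F s) * Sig (Ssum (tag s))
    + var F s * \sum_j cst C (A (tag s) j) * Kw (Xc j).
Proof.
case: hKw => _ ->; congr (_ * _ + _ * _).
  by rewrite Sig_S'.
rewrite sum_clone; apply: eq_bigr => j _.
by rewrite (Sig_var hS) rmorph_sum mulr_sumr.
Qed.

Lemma Kw_sum (i : 'I_n) :
  Kw (Xc i) - Xc i = Kw (Xc i) * Sig (Ssum i)
    + Xc i * \sum_j cst C (A i j) * Kw (Xc j).
Proof.
rewrite (Sig_var hS) rmorph_sum -sumrB.
under eq_bigr => k _ do rewrite Kw_gen /=.
by rewrite big_split /= -!mulr_suml.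
Qed.

Variables (K : {rmorphism RI -> RI}).
Hypothesis hK : is_kahan (mat_fun A) K.

Lemma K_Sig (i : 'I_n) :
  Sig (K (var F i)) - Xc i = Sig (K (var F i)) * Sig (Ssum i)
    + Xc i * \sum_j cst C (A i j) * Sig (K (var F j)).
Proof.
case: hK => _ /(_ i) e.
have := congr1 Sig e; rewrite rmorphB rmorphD !rmorphM => ->.
congr (_ + _ * _).
rewrite rmorph_sum; apply: eq_bigr => j _.
by rewrite rmorphM /= (Sig_cst hS).
Qed.

Lemma part1 f : Kw (Sig f) = Sig (K f).
Proof.
have hv : forall i, Kw (Xc i) = Sig (K (var F i)).
  pose PX (i : 'I_n) : polV F C := \sum_(k : 'I_(w i)) 'X_(enum_rank (T_ k)).
  pose PT (i : 'I_n) : polV F C := \sum_j (A i j)%:MP * PX j.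
  have ePX : forall i, tofrac (PX i) = Xc i.
    by move=> i; rewrite (Sig_var hS) rmorph_sum.
  have ePT : forall i, tofrac (PT i) = Sig (Ssum i).
    move=> i; rewrite Sig_S rmorph_sum; apply: eq_bigr => j _.
    by rewrite rmorphM /= ePX.
  have hX0 : forall i, mcoeff 0 (PX i) = 0.
    move=> i; rewrite raddf_sum big1 // => k _.
    have := @mcoeffX #|C| F U_(enum_rank (T_ k)) 0%MM; rewrite /= => ->.
    by rewrite mnm1_eq0.
  have hT0 : forall i, mcoeff 0 (PT i) = 0.
    move=> i; rewrite raddf_sum big1 // => j _.
    by rewrite /= mul_mpolyC mcoeffZ hX0 mulr0.
  move=> i; apply/eqP; rewrite -subr_eq0; apply/eqP; move: i.
  apply: (@lin_uniq F C n (fun i j => A i j) PX PT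
            (fun i => Kw (Xc i) - Sig (K (var F i)))) => // i.
  rewrite ePT ePX.
  have -> : \sum_j cst C (A i j) * (Kw (Xc j) - Sig (K (var F j))) =
     \sum_j cst C (A i j) * Kw (Xc j) - \sum_j cst C (A i j) * Sig (K (var F j)).
    by rewrite -sumrB; apply: eq_bigr => j _; rewrite mulrBr.
  apply: alg_lin; [exact: Kw_sum | exact: K_Sig].
have := @rmorph_ext F 'I_n RC (Kw \o Sig) (Sig \o K).
move=> h; apply: h => [c|v] /=.
  by case: hK => -> _; rewrite (Sig_cst hS); case: hKw => -> _.
exact: hv.
Qed.

Lemma part3b : poisson_map (clone_fun A w) (clone_fun A w) Kw ->
  poisson_map (mat_fun A) (mat_fun A) K.
Proof.
move=> hp f g; apply: (fmorph_inj Sig).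
by rewrite -part1 (Sig_poisson A hS) hp !part1 (Sig_poisson A hS).
Qed.

Lemma oneS_neq0 i : 1 - Ssum i != 0.
Proof.
have -> : 1 - Ssum i =
    tofrac (1 - \sum_j (A i j)%:MP * 'X_(enum_rank j)) :> RI.
  rewrite rmorphB rmorph1 rmorph_sum; congr (_ - _); apply: eq_bigr => j _.
  by rewrite rmorphM.
rewrite tofrac_eq0; apply/eqP => e.
have := congr1 (mcoeff 0) e.
rewrite /= raddfB /= raddf_sum /= mcoeff1 eqxx big1 ?subr0.
  by rewrite mcoeff0 => /eqP; rewrite oner_eq0.
move=> j _; rewrite /= mul_mpolyC mcoeffZ.
have := @mcoeffX #|'I_n| F U_(enum_rank j) 0%MM; rewrite /= => ->.
by rewrite mnm1_eq0 mulr0.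
Qed.

Definition Bsum (i : 'I_n) : RI := \sum_j cst 'I_n (A i j) * K (var F j).
Definition Rr (i : 'I_n) : RI := (1 + Bsum i) / (1 - Ssum i).

Lemma K_var i : K (var F i) = var F i * Rr i.
Proof.
apply: alg_solve; first exact: oneS_neq0.
by case: hK => _ ->.
Qed.

Lemma Kw_var (s : C) : Kw (var F s) = var F s * Sig (Rr (tag s)).
Proof.
rewrite /Rr fmorph_div rmorphD rmorphB rmorph1.
apply: alg_solve; first by rewrite -(rmorph1 Sig) -rmorphB fmorph_eq0 oneS_neq0.
rewrite Kw_gen; congr (_ + _ * _).
rewrite /Bsum rmorph_sum; apply: eq_bigr => j _.
by rewrite part1 rmorphM /= (Sig_cst hS).
Qed.

Lemma part3a : poisson_map (mat_fun A) (mat_fun A) K ->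
  poisson_map (clone_fun A w) (clone_fun A w) Kw.
Proof.
move=> hp.
have key : forall (i j : 'I_n) (Ri Rj : RI),
    K (var F i) = var F i * Ri -> K (var F j) = var F j * Rj ->
    pbracket (mat_fun A) Ri Rj
    + Rj * (\sum_u cst 'I_n (A u j) * var F u * pderiv u Ri)
    + Ri * (\sum_v cst 'I_n (A i v) * var F v * pderiv v Rj) = 0.
  move=> i j Ri Rj hi hj.
  apply: (@alg_psi _ (var F i) (var F j) _ _ _ _ _ (cst 'I_n (A i j))).
  - exact: var_neq0.
  - exact: var_neq0.
  have e := hp (var F i) (var F j).
  rewrite pbracket_vv !rmorphM /= hi hj in e.
  case: hK => hc _; rewrite hc in e.
  rewrite e pbracket_prod pbracket_var_r pbracket_var_l pbracket_vv.
  by [].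
apply: poisson_gen; first by case: hKw.
move=> s t.
have hpsi := key (tag s) (tag t) _ _ (K_var _) (K_var _).
rewrite !rmorphM /= !Kw_var.
case: hKw => -> _.
move: (Rr (tag s)) (Rr (tag t)) hpsi => Ri Rj hpsi.
rewrite pbracket_prod -(Sig_poisson A hS) (clone_br_r A hS) (clone_br_l A hS) pbracket_vv.
apply: alg_concl.
have := congr1 Sig hpsi.
by rewrite rmorph0 !rmorphD !rmorphM.
Qed.

End Kahan.

End Helpers.
Import Helpers.

Theorem proposition2p3 (F : numFieldType) (n : nat) (A : 'M[F]_n)
  (w : 'I_n -> nat)
  (K : {rmorphism ratf F 'I_n -> ratf F 'I_n})
  (Kw : {rmorphism ratf F (cloneV w) -> ratf F (cloneV w)})
  (Sig : {rmorphism ratf F 'I_n -> ratf F (cloneV w)}) :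
  A^T = - A ->
  (forall i, (0 < w i)%N) ->
  is_kahan (mat_fun A) K ->
  is_kahan (clone_fun A w) Kw ->
  is_decloning Sig ->
  [/\ (forall f, Kw (Sig f) = Sig (K f)),
      poisson_map (mat_fun A) (clone_fun A w) Sig,
      (poisson_map (mat_fun A) (mat_fun A) K <->
       poisson_map (clone_fun A w) (clone_fun A w) Kw)
    & (kahan_poisson (mat_fun A) <-> kahan_poisson (clone_fun A w))].
Proof.
move=> _ _ hK hKw hS.
split.
- move=> f; exact: (part1 hS hKw hK f).
- exact: (Sig_poisson A hS).
- split; [exact: (part3a hS hKw hK) | exact: (part3b hS hKw hK)].
- split => hkp.
  + move=> Kw' hKw'; apply: (part3a hS hKw' hK); exact: hkp.
  + move=> K' hK'; apply: (part3b hS hKw hK'); exact: hkp.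
Qed.
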